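(* Let $A=\{0,1,2\}$ and let $T\colon A^4\to A$ be given by $T(1,1,2,2)=T(1,2,1,2)=1$ and $T(\mathbf{x})=0$ for all other $\mathbf{x}\in A^4$. Then \[\langle\{T\}\rangle^{(2)}=\{e^2_1,e^2_2,c^2_0,\delta_{(1,2)},\delta_{(2,1)}\},\] where $e^2_1(x,y)=x$, $e^2_2(x,y)=y$, $c^2_0$ is the binary constant zero function, and for $\mathbf{a}\in A^2$, $\delta_{\mathbf{a}}(\mathbf{x})=1$ if $\mathbf{x}=\mathbf{a}$ and $\delta_{\mathbf{a}}(\mathbf{x})=0$ otherwise.
   Context: $\langle\{T\}\rangle$ denotes the clone generated by $T$ (all term operations of positive arity of $(A;T)$, including projections), and $\langle\{T\}\rangle^{(2)}$ its binary members. *)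

(* Defs.v *)
From mathcomp Require Import all_boot.
Set Implicit Arguments. Unset Strict Implicit. Unset Printing Implicit Defensive.

Definition A := 'I_3.

Definition T (x1 x2 x3 x4 : A) : nat :=
  if ((x1 == 1 :> nat) && (x2 == 1 :> nat) && (x3 == 2 :> nat) && (x4 == 2 :> nat))
     || ((x1 == 1 :> nat) && (x2 == 2 :> nat) && (x3 == 1 :> nat) && (x4 == 2 :> nat))
  then 1 else 0.

Lemma T_lt3 x1 x2 x3 x4 : T x1 x2 x3 x4 < 3.
Proof. by rewrite /T; case: ifP. Qed.

Definition TA (x1 x2 x3 x4 : A) : A := Ordinal (T_lt3 x1 x2 x3 x4).

Inductive term2 : Type :=
| VarX : term2
| VarY : term2
| AppT : term2 -> term2 -> term2 -> term2 -> term2.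

Fixpoint eval2 (t : term2) (x y : A) : A :=
  match t with
  | VarX => x
  | VarY => y
  | AppT t1 t2 t3 t4 => TA (eval2 t1 x y) (eval2 t2 x y) (eval2 t3 x y) (eval2 t4 x y)
  end.

(* f belongs to <{T}>^(2): f is a binary term operation of (A; T). *)
Definition in_clone2 (f : A -> A -> A) : Prop :=
  exists t : term2, forall x y, eval2 t x y = f x y.

Definition e21 (x y : A) : nat := x.
Definition e22 (x y : A) : nat := y.
Definition c20 (x y : A) : nat := 0.
Definition delta (a b : nat) (x y : A) : nat :=
  if (x == a :> nat) && (y == b :> nat) then 1 else 0.

(* Main.v *)
Require Import Defs.
From mathcomp Require Import all_boot.

Definition Tn (a b c d : nat) : nat :=
  if ((a == 1) && (b == 1) && (c == 2) && (d == 2))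
     || ((a == 1) && (b == 2) && (c == 1) && (d == 2)) then 1 else 0.

Definition g (k x y : nat) : nat :=
  match k with
  | 0 => x | 1 => y | 2 => 0
  | 3 => if (x == 1) && (y == 2) then 1 else 0
  | _ => if (x == 2) && (y == 1) then 1 else 0 end.

Definition okk (k1 k2 k3 k4 k : nat) :=
  all (fun x => all (fun y => Tn (g k1 x y) (g k2 x y) (g k3 x y) (g k4 x y) == g k x y)
     (iota 0 3)) (iota 0 3).

Lemma closure_b : all (fun k1 => all (fun k2 => all (fun k3 => all (fun k4 =>
  has (okk k1 k2 k3 k4) (iota 0 5)) (iota 0 5)) (iota 0 5)) (iota 0 5)) (iota 0 5).
Proof. vm_compute. reflexivity. Qed.

Lemma cls t : exists2 k, k \in iota 0 5 & forall x y : A, eval2 t x y = g k x y :> nat.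
Proof.
elim: t => [ | | t1 [k1 h1 e1] t2 [k2 h2 e2] t3 [k3 h3 e3] t4 [k4 h4 e4]].
- by exists 0.
- by exists 1.
have := closure_b.
move/allP/(_ _ h1)/allP/(_ _ h2)/allP/(_ _ h3)/allP/(_ _ h4)/hasP => [k hk ok].
exists k => // x y.
have hx : (x : nat) \in iota 0 3 by rewrite mem_iota add0n ltn_ord.
have hy : (y : nat) \in iota 0 3 by rewrite mem_iota add0n ltn_ord.
move/allP: ok => /(_ _ hx) /allP /(_ _ hy) /eqP <-.
by rewrite /= -e1 -e2 -e3 -e4.
Qed.

Theorem lemma3p8 (f : A -> A -> A) :
  in_clone2 f <->
  ((forall x y, f x y = e21 x y :> nat) \/
   (forall x y, f x y = e22 x y :> nat) \/
   (forall x y, f x y = c20 x y :> nat) \/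
   (forall x y, f x y = delta 1 2 x y :> nat) \/
   (forall x y, f x y = delta 2 1 x y :> nat)).
Proof.
split.
- case=> t ht; have [k hk e] := cls t.
  move: hk; rewrite mem_iota /= add0n.
  case: k e => [|[|[|[|[|k]]]]] e _ //.
  + by left => x y; rewrite -ht e.
  + by right; left => x y; rewrite -ht e.
  + by right; right; left => x y; rewrite -ht e.
  + by right; right; right; left => x y; rewrite -ht e.
  + by right; right; right; right => x y; rewrite -ht e.
- case=> [h|[h|[h|[h|h]]]].
  + exists VarX => x y; apply: val_inj; by rewrite /= h.
  + exists VarY => x y; apply: val_inj; by rewrite /= h.
  + exists (AppT VarX VarX VarX VarX) => x y; apply: val_inj; rewrite /= h.
    by case: x => [[|[|[|m]]] Hx].
  + exists (AppT VarX VarX VarY VarY) => x y; apply: val_inj; rewrite /= h.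
    by case: x => [[|[|[|m]]] Hx] //; case: y => [[|[|[|m]]] Hy].
  + exists (AppT VarY VarY VarX VarX) => x y; apply: val_inj; rewrite /= h.
    by case: x => [[|[|[|m]]] Hx] //; case: y => [[|[|[|m]]] Hy].
Qed.
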